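(* Let $p$ be an odd prime and let $\mathcal{A}=(G_x,G_e,G_{xy})$ be a finite, primitive amalgam of degree $(p,2)$. If $q$ is a prime dividing $|G_{xy}|$, then $q<p$.
   Context: An amalgam $(A_1,A_2,B,\pi_1,\pi_2)$ consists of groups with monomorphisms $\pi_i:B\to A_i$; here $G_{xy}$ is identified with its images in $G_x$ and $G_e$. Degree $(p,2)$ means $|G_x:G_{xy}|=p$ and $|G_e:G_{xy}|=2$; finite means $G_{xy}$ is finite; primitive means the only subgroup of $G_{xy}$ normal in both $G_x$ and $G_e$ is trivial. *)

(* Defs.v *)
From mathcomp Require Import all_boot all_fingroup.
Set Implicit Arguments. Unset Strict Implicit. Unset Printing Implicit Defensive.
Local Open Scope group_scope.

Definition amalgam (gT1 gT2 bT : finGroupType)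
    (A1 : {group gT1}) (A2 : {group gT2}) (B : {group bT})
    (pi1 : {morphism B >-> gT1}) (pi2 : {morphism B >-> gT2}) : Prop :=
  [/\ 'injm pi1, pi1 @* B \subset A1, 'injm pi2 & pi2 @* B \subset A2].

Definition amalgam_degree (gT1 gT2 bT : finGroupType)
    (A1 : {group gT1}) (A2 : {group gT2}) (B : {group bT})
    (pi1 : {morphism B >-> gT1}) (pi2 : {morphism B >-> gT2}) (m n : nat) : Prop :=
  #|A1 : pi1 @* B| = m /\ #|A2 : pi2 @* B| = n.

Definition amalgam_primitive (gT1 gT2 bT : finGroupType)
    (A1 : {group gT1}) (A2 : {group gT2}) (B : {group bT})
    (pi1 : {morphism B >-> gT1}) (pi2 : {morphism B >-> gT2}) : Prop :=
  forall K : {group bT}, K \subset B ->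
    pi1 @* K <| A1 -> pi2 @* K <| A2 -> K :=: 1.

(* Main.v *)
Require Import Defs.
From mathcomp Require Import all_boot all_fingroup.
From mathcomp Require Import pgroup sylow.
Set Implicit Arguments. Unset Strict Implicit. Unset Printing Implicit Defensive.
Local Open Scope group_scope.

Lemma key (gT : finGroupType) (A C : {group gT}) (p q : nat) (x g : gT) :
  C \subset A -> #|A : C| = p -> prime q -> p <= q ->
  x \in C -> q.-elt x -> g \in A -> x \in C :^ g.
Proof.
move=> sCA iAC qpr pq Cx qx Ag.
apply/negPn/negP => nDx.
set X := <[x]>.
have sXC : X \subset C by rewrite cycle_subG.
have sDA : C :^ g \subset A by rewrite sub_conjg (normsP (normG A)) ?groupV // .
set i := #|X : X :&: C :^ g|.
have LX : (#|X :&: C :^ g| * i)%N = #|X| by rewrite Lagrange ?subsetIl.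
have hM := mul_cardG X (C :^ g)%G.
have LA : (#|C| * p)%N = #|A| by rewrite -iAC Lagrange.
have sXDA : X * C :^ g \subset A by rewrite mul_subG // (subset_trans sXC).
have cXD : #|X * C :^ g| = (i * #|C|)%N.
  have pos : 0 < #|X :&: C :^ g| by rewrite cardG_gt0.
  apply/eqP; rewrite -(eqn_pmul2r pos) -hM /= cardJg -LX; apply/eqP.
  by rewrite [RHS]mulnC mulnA.
have ile : i <= p.
  have := subset_leq_card sXDA; rewrite cXD -LA mulnC leq_pmul2l ?cardG_gt0 //.
have idv : i %| #[x] by rewrite -[#[x]]/#|X| -LX dvdn_mull.
have qi : q.-nat i := pnat_dvd idv qx.
have i1 : i != 1%N.
  apply: contra nDx => /eqP i1.
  have : X \subset C :^ g.
    by apply/setIidPl; apply: index1g; rewrite ?subsetIl.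
  by rewrite cycle_subG.
have iq : q <= i.
  case: (p_natP qi) => k ik; rewrite ik in i1 *.
  case: k ik i1 => [|k] _; first by rewrite expn0 eqxx.
  by move=> _; rewrite expnS leq_pmulr // expn_gt0 prime_gt0.
have ip : i = p by apply/eqP; rewrite eqn_leq ile (leq_trans pq iq).
have eA : X * C :^ g = A.
  apply/eqP; rewrite eqEcard sXDA cXD ip mulnC LA leqnn //.
move: Ag; rewrite -eA => /mulsgP[y d Xy Dd gE].
have Cy : y \in C by apply: (subsetP sXC).
have : d ^ g^-1 \in C by rewrite -mem_conjg.
have -> : d = y^-1 * g by rewrite gE mulKg.
rewrite conjgE invgK !mulgA mulgK => Cgy.
have Cg : g \in C by rewrite -(groupMr _ (groupVr Cy)).
by rewrite conjGid // Cx in nDx.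
Qed.

Lemma norm_qgen (gT : finGroupType) (A H : {group gT}) (q : nat) :
  H \subset A ->
  (forall a y, a \in A -> y \in H -> q.-elt y -> y ^ a \in H) ->
  <<[set y in H | q.-elt y]>> <| A.
Proof.
move=> sHA hyp; rewrite /normal gen_subG; apply/andP; split.
  by apply/subsetP=> z; rewrite inE => /andP[Hz _]; apply: (subsetP sHA).
apply: norms_gen; apply/subsetP=> a Aa; rewrite inE; apply/subsetP=> z.
rewrite mem_conjg !inE => /andP[Hz qz].
have := hyp a _ Aa Hz qz; rewrite conjgKV => ->.
by rewrite p_eltJ in qz.
Qed.

Lemma morph_qgen (aT rT : finGroupType) (D : {group aT})
  (f : {morphism D >-> rT}) (q : nat) : 'injm f ->
  f @* <<[set y in D | q.-elt y]>> = <<[set y in f @* D | q.-elt y]>>.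
Proof.
move=> injf; rewrite morphim_gen; last first.
  by apply/subsetP=> z; rewrite inE => /andP[].
congr <<_>>; apply/setP => z; rewrite inE; apply/morphimP/andP.
  case=> y Dy; rewrite inE => /andP[_ qy] ->.
  by rewrite mem_morphim // injm_pelt.
case=> /morphimP[y Dy _ ->] qz; exists y => //.
by rewrite inE Dy -(injm_pelt injf).
Qed.

Theorem mainTheorem4 (gT1 gT2 bT : finGroupType)
    (A1 : {group gT1}) (A2 : {group gT2}) (B : {group bT})
    (pi1 : {morphism B >-> gT1}) (pi2 : {morphism B >-> gT2}) (p : nat) :
  prime p -> odd p ->
  amalgam A1 A2 pi1 pi2 ->
  amalgam_degree A1 A2 pi1 pi2 p 2 ->
  amalgam_primitive A1 A2 pi1 pi2 ->
  forall q : nat, prime q -> q %| #|B| -> q < p.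
Proof.
move=> ppr podd [inj1 s1 inj2 s2] [i1 i2] prim q qpr qB.
rewrite ltnNge; apply/negP => pq.
set T := <<[set y in B | q.-elt y]>>.
have sTB : T \subset B.
  by rewrite gen_subG; apply/subsetP=> z; rewrite inE => /andP[].
have n1 : pi1 @* T <| A1.
  rewrite /T morph_qgen //; apply: norm_qgen => // a y Aa Hy qy.
  by rewrite -mem_conjgV (key s1 i1 qpr pq Hy qy) ?groupV.
have n2 : pi2 @* T <| A2.
  rewrite /T morph_qgen //; apply: norm_qgen => // a y Aa Hy qy.
  have nB := index2_normal s2 i2.
  by rewrite memJ_norm // (subsetP (normal_norm nB)).
have T1 := prim [group of T] sTB n1 n2.
have [x Bx ox] := Cauchy qpr qB.
have : x \in T by rewrite mem_gen // inE Bx /p_elt ox pnat_id.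
rewrite /= in T1; rewrite T1 => /set1P x1.
by move: ox; rewrite x1 order1 => q1; rewrite -q1 in qpr.
Qed.
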